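(* Let ${\mathcal M}:{\mathbb E}\to{\mathbb F}$ be a linear map between finite-dimensional Euclidean spaces, $\mathcal{K}\subseteq{\mathbb E}$ a convex cone, $b\in{\mathbb F}$, and ${\mathcal F}=\{X\in\mathcal{K}:{\mathcal M}(X)=b\}$ (assumed nonempty). Let $v_1,\dots,v_r\in b^{\perp}$ satisfy $v_1\in{\mathcal M}(\mathcal{K})^*$ and $v_i\in\big({\mathcal M}(\mathcal{K})\cap v_1^{\perp}\cap\cdots\cap v_{i-1}^{\perp}\big)^*$ for $i=2,\dots,r$. Put $N={\mathcal M}(\mathcal{K})\cap v_1^\perp\cap\cdots\cap v_r^\perp$ and $E=\mathcal{K}\cap({\mathcal M}^*v_1)^\perp\cap\cdots\cap({\mathcal M}^*v_r)^\perp$. Then: (1) for each $i$, $v_i$ exposes a face of ${\mathcal M}(\mathcal{K})\cap v_1^\perp\cap\cdots\cap v_{i-1}^\perp$ containing $b$, and ${\mathcal M}^*v_i$ exposes a face of $\mathcal{K}\cap({\mathcal M}^*v_1)^\perp\cap\cdots\cap({\mathcal M}^*v_{i-1})^\perp$ containing ${\mathcal F}$; (2) $N$ is a face of ${\mathcal M}(\mathcal{K})$ containing $b$, and $E$ is a face of $\mathcal{K}$ containing ${\mathcal F}$; (3) $N=\operatorname{face}(b,{\mathcal M}(\mathcal{K}))$ if and only if $E=\operatorname{face}({\mathcal F},\mathcal{K})$.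
   Context: $\operatorname{face}(S,C)$ denotes the smallest face of the cone $C$ containing the set $S$ (intersection of all faces containing $S$). $S^*$ is the dual cone, $v^\perp$ the orthogonal complement of $\{v\}$. A vector $w$ in the dual of a cone $C$ exposes the face $C\cap w^\perp$. *)

(* Defs.v *)
(* Euclidean spaces are modelled as row vectors 'rV[R]_n over
   a real number type R with the standard inner product. *)
From mathcomp Require Import all_boot all_order all_algebra.
From mathcomp Require Import reals.
Set Implicit Arguments. Unset Strict Implicit. Unset Printing Implicit Defensive.
Import Order.TTheory GRing.Theory Num.Theory.
Local Open Scope ring_scope.

Section Defs.
Variable R : realType.

Definition dotv n (x y : 'rV[R]_n) : R := (x *m y^T) 0 0.

Definition orth n (w : 'rV[R]_n) : 'rV[R]_n -> Prop := fun x => dotv x w = 0.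

Definition setI_ n (A B : 'rV[R]_n -> Prop) : 'rV[R]_n -> Prop :=
  fun x => A x /\ B x.

Definition subset_ n (A B : 'rV[R]_n -> Prop) : Prop := forall x, A x -> B x.

Definition seteq n (A B : 'rV[R]_n -> Prop) : Prop := forall x, A x <-> B x.

Definition dual n (S : 'rV[R]_n -> Prop) : 'rV[R]_n -> Prop :=
  fun w => forall x, S x -> 0 <= dotv x w.

Definition convex_set n (C : 'rV[R]_n -> Prop) : Prop :=
  forall x y (t : R), C x -> C y -> 0 <= t <= 1 -> C ((1 - t) *: x + t *: y).

Definition convex_cone n (K : 'rV[R]_n -> Prop) : Prop :=
  (forall x y, K x -> K y -> K (x + y)) /\
  (forall (a : R) x, 0 < a -> K x -> K (a *: x)).

Definition is_face n (F C : 'rV[R]_n -> Prop) : Prop :=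
  subset_ F C /\ convex_set F /\
  forall x y (t : R), C x -> C y -> 0 < t < 1 ->
    F ((1 - t) *: x + t *: y) -> F x /\ F y.

Definition face_of n (S C : 'rV[R]_n -> Prop) : 'rV[R]_n -> Prop :=
  fun x => forall F, is_face F C -> subset_ S F -> F x.

Definition exposes n (w : 'rV[R]_n) (C G : 'rV[R]_n -> Prop) : Prop :=
  dual C w /\ seteq G (setI_ C (orth w)) /\ is_face G C.

Definition lin_image n m (M : 'M[R]_(n, m)) (K : 'rV[R]_n -> Prop) : 'rV[R]_m -> Prop :=
  fun y => exists x, K x /\ y = x *m M.

(* adjoint M^* v = v *m M^T, so that <x *m M, v> = <x, v *m M^T> *)
Definition adj n m (M : 'M[R]_(n, m)) (v : 'rV[R]_m) : 'rV[R]_n := v *m M^T.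

Definition Nk n m (M : 'M[R]_(n, m)) (K : 'rV[R]_n -> Prop)
  (v : nat -> 'rV[R]_m) (k : nat) : 'rV[R]_m -> Prop :=
  fun y => lin_image M K y /\ forall j, (j < k)%N -> dotv y (v j) = 0.

Definition Ek n m (M : 'M[R]_(n, m)) (K : 'rV[R]_n -> Prop)
  (v : nat -> 'rV[R]_m) (k : nat) : 'rV[R]_n -> Prop :=
  fun x => K x /\ forall j, (j < k)%N -> dotv x (adj M (v j)) = 0.

Definition feas n m (M : 'M[R]_(n, m)) (K : 'rV[R]_n -> Prop) (b : 'rV[R]_m)
  : 'rV[R]_n -> Prop := fun x => K x /\ x *m M = b.

End Defs.

(* Main.v *)
Require Import Defs.
From mathcomp Require Import all_boot all_order all_algebra.
From mathcomp Require Import reals.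
From mathcomp Require Import ring lra.
Import Order.TTheory GRing.Theory Num.Theory.
Local Open Scope ring_scope.
Set Implicit Arguments. Unset Strict Implicit. Unset Printing Implicit Defensive.

Section Aux.
Variable R : realType.

Lemma dotvDl n (x y w : 'rV[R]_n) : dotv (x + y) w = dotv x w + dotv y w.
Proof. by rewrite /dotv mulmxDl mxE. Qed.

Lemma dotvZl n (a : R) (x w : 'rV[R]_n) : dotv (a *: x) w = a * dotv x w.
Proof. by rewrite /dotv -scalemxAl mxE. Qed.

Lemma dot_adj n m (M : 'M[R]_(n,m)) x v : dotv (x *m M) v = dotv x (adj M v).
Proof. by rewrite /dotv /adj trmx_mul trmxK mulmxA. Qed.

Lemma cone_comb n (K : 'rV[R]_n -> Prop) x y (a c : R) :
  convex_cone K -> K x -> K y -> 0 <= a -> 0 <= c -> 0 < a + c ->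
  K (a *: x + c *: y).
Proof.
move=> [KD KZ] Kx Ky a0 c0 ac.
have [ea|an] := eqVneq a 0.
  rewrite ea scale0r add0r; apply: KZ => //; by rewrite ea add0r in ac.
have [ec|cn] := eqVneq c 0.
  rewrite ec scale0r addr0; apply: KZ => //; by rewrite ec addr0 in ac.
by apply: KD; apply: KZ => //; rewrite lt_def ?an ?cn.
Qed.

Lemma cone_convex n (K : 'rV[R]_n -> Prop) : convex_cone K -> convex_set K.
Proof.
move=> HK x y t Kx Ky /andP[t0 t1]; apply: cone_comb => //; lra.
Qed.

Definition Hk n (C : 'rV[R]_n -> Prop) (w : nat -> 'rV[R]_n) k :=
  fun x => C x /\ forall j, (j < k)%N -> dotv x (w j) = 0.

Lemma Hk_cone n (C : 'rV[R]_n -> Prop) w k : convex_cone C -> convex_cone (Hk C w k).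
Proof.
move=> [CD CZ]; split.
  move=> x y [Cx Hx] [Cy Hy]; split; first exact: CD.
  by move=> j jk; rewrite dotvDl Hx ?Hy ?addr0.
move=> a x a0 [Cx Hx]; split; first exact: CZ.
by move=> j jk; rewrite dotvZl Hx ?mulr0.
Qed.

Lemma orth_cone n (C : 'rV[R]_n -> Prop) w : convex_cone C -> convex_cone (setI_ C (orth w)).
Proof.
move=> [CD CZ]; split.
  move=> x y [Cx Hx] [Cy Hy]; split; first exact: CD.
  by rewrite /orth dotvDl Hx Hy addr0.
move=> a x a0 [Cx Hx]; split; first exact: CZ.
by rewrite /orth dotvZl Hx mulr0.
Qed.

Lemma zero_split (dx dy t : R) : 0 <= dx -> 0 <= dy -> 0 < t < 1 ->
  (1 - t) * dx + t * dy = 0 -> dx = 0 /\ dy = 0.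
Proof. move=> hx hy /andP[t0 t1] h; split; nra. Qed.

Lemma expose_face n (C : 'rV[R]_n -> Prop) w : convex_cone C -> dual C w ->
  exposes w C (setI_ C (orth w)).
Proof.
move=> HC Hd; split => //; split; first by move=> x; split.
split; first by move=> x [].
split; first by apply: cone_convex; apply: orth_cone.
move=> x y t Cx Cy t01 [Cz]; rewrite /orth dotvDl !dotvZl => hz.
have [hx hy] := zero_split (Hd x Cx) (Hd y Cy) t01 hz.
by split; split.
Qed.

Lemma Hk_face_prop n (C : 'rV[R]_n -> Prop) w r :
  (forall j, (j < r)%N -> dual (Hk C w j) (w j)) ->
  forall k, (k <= r)%N -> forall x y t, C x -> C y -> 0 < t < 1 ->
  Hk C w k ((1 - t) *: x + t *: y) -> Hk C w k x /\ Hk C w k y.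
Proof.
move=> Hd; elim => [|k IH] kr x y t Cx Cy t01 [Cz Hz].
  by split; split => // j; rewrite ltn0.
have [Hx Hy] := IH (ltnW kr) x y t Cx Cy t01
   (conj Cz (fun j jk => Hz j (leqW jk))).
have := Hz k (ltnSn k); rewrite dotvDl !dotvZl => hz.
have [hx hy] := zero_split (Hd k kr x Hx) (Hd k kr y Hy) t01 hz.
split; split => // j; rewrite ltnS leq_eqVlt => /orP[/eqP->|jk] //.
  exact: Hx.2 j jk.
exact: Hy.2 j jk.
Qed.

Lemma Hk_face n (C : 'rV[R]_n -> Prop) w r : convex_cone C ->
  (forall j, (j < r)%N -> dual (Hk C w j) (w j)) -> is_face (Hk C w r) C.
Proof.
move=> HC Hd; split; first by move=> x [].
split; first by apply: cone_convex; apply: Hk_cone.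
move=> x y t Cx Cy t01 Hz; exact: (Hk_face_prop Hd (leqnn r) Cx Cy t01 Hz).
Qed.

Lemma lin_cone n m (M : 'M[R]_(n,m)) K : convex_cone K -> convex_cone (lin_image M K).
Proof.
move=> [KD KZ]; split.
  move=> _ _ [x [Kx ->]] [y [Ky ->]]; exists (x + y); split; first exact: KD.
  by rewrite mulmxDl.
move=> a _ a0 [x [Kx ->]]; exists (a *: x); split; first exact: KZ.
by rewrite scalemxAl.
Qed.

Lemma decomp n (a c : R) (w y : 'rV[R]_n) : 0 < c -> c < a ->
  a^-1 *: (w + c *: y) = (1 - c / a) *: ((a - c)^-1 *: w) + (c / a) *: y.
Proof.
move=> c0 ca.
have ha : a != 0 by apply: lt0r_neq0; lra.
have hac : a - c != 0 by apply: lt0r_neq0; lra.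
rewrite scalerDr !scalerA; congr (_ *: _ + _ *: _); field; by rewrite ?ha ?hac.
Qed.

Lemma frac01 (a c : R) : 0 < c -> c < a -> 0 < c / a < 1.
Proof.
move=> c0 ca; apply/andP; split; first by apply: divr_gt0 => //; lra.
rewrite ltr_pdivrMr; last lra.
lra.
Qed.

Definition Sb n (C : 'rV[R]_n -> Prop) b := fun y => C y /\
  exists w a c, C w /\ 0 < c /\ c < a /\ a *: b = w + c *: y.

Lemma Sb_b n (C : 'rV[R]_n -> Prop) b : C b -> Sb C b b.
Proof.
move=> Cb; split => //; exists b, (1 + 1), 1; split => //; split; first lra.
split; first lra. by rewrite scalerDl !scale1r.
Qed.

Lemma Sb_in_face n (C F : 'rV[R]_n -> Prop) b y : convex_cone C ->
  is_face F C -> F b -> Sb C b y -> F y.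
Proof.
move=> HC [_ [_ HF]] Fb [Cy [w [a [c [Cw [c0 [ca e]]]]]]].
have ha : a != 0 by apply: lt0r_neq0; lra.
have bb : b = (1 - c / a) *: ((a - c)^-1 *: w) + (c / a) *: y.
  by rewrite -decomp // -e scalerA mulVf ?scale1r.
have Cw' : C ((a - c)^-1 *: w) by apply: HC.2 => //; rewrite invr_gt0; lra.
rewrite bb in Fb.
exact: (HF _ _ _ Cw' Cy (frac01 c0 ca) Fb).2.
Qed.

Lemma Sb_face n (C : 'rV[R]_n -> Prop) b : convex_cone C -> C b -> is_face (Sb C b) C.
Proof.
move=> HC Cb; split; first by move=> y [].
split.
  move=> y1 y2 t [C1 [w1 [a1 [c1 [Cw1 [c10 [ca1 e1]]]]]]]
    [C2 [w2 [a2 [c2 [Cw2 [c20 [ca2 e2]]]]]]] t01.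
  split; first exact: cone_convex.
  move/andP: t01 => [t0 t1].
  exists (((1 - t) * c2) *: w1 + (t * c1) *: w2),
    ((1 - t) * (a1 * c2) + t * (a2 * c1)), (c1 * c2).
  split; first by apply: cone_comb => //; nra.
  split; first nra.
  split.
    have p1 : 0 < c2 * (a1 - c1) by apply: mulr_gt0; lra.
    have p2 : 0 < c1 * (a2 - c2) by apply: mulr_gt0; lra.
    have [->|tn] := eqVneq t 1; first nra.
    have q1 : 0 < (1 - t) * (c2 * (a1 - c1)).
      apply: mulr_gt0 => //; rewrite subr_gt0 lt_def eq_sym tn; lra.
    have q2 : 0 <= t * (c1 * (a2 - c2)) by apply: mulr_ge0; lra.
    nra.
  have e1' : (a1 * c2) *: b = c2 *: w1 + (c1 * c2) *: y1.
    by rewrite [a1 * c2]mulrC -[(c2 * a1) *: b]scalerA e1 scalerDr scalerA [c2 * c1]mulrC.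
  have e2' : (a2 * c1) *: b = c1 *: w2 + (c1 * c2) *: y2.
    by rewrite [a2 * c1]mulrC -[(c1 * a2) *: b]scalerA e2 scalerDr scalerA.
  rewrite [_ *: b]scalerDl -(scalerA (1 - t) (a1 * c2) b) -(scalerA t (a2 * c1) b) e1' e2'.
  rewrite !scalerDr !scalerA [(c1 * c2) * (1 - t)]mulrC [(c1 * c2) * t]mulrC.
  by rewrite addrACA.
move=> x y t Cx Cy /andP[t0 t1] [Cz [w [a [c [Cw [c0 [ca e]]]]]]].
split; split => //.
  exists (w + (c * t) *: y), a, (c * (1 - t)).
  split; first by apply: HC.1 => //; apply: HC.2 => //; nra.
  split; first nra. split; first nra.
  by rewrite e scalerDr !scalerA addrA addrAC.
exists (w + (c * (1 - t)) *: x), a, (c * t).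
split; first by apply: HC.1 => //; apply: HC.2 => //; nra.
split; first nra. split; first nra.
by rewrite e scalerDr !scalerA addrA.
Qed.

Lemma pre_face n m (M : 'M[R]_(n,m)) K H : convex_cone K ->
  is_face H (lin_image M K) -> is_face (fun x => K x /\ H (x *m M)) K.
Proof.
move=> HK HH; split; first by move=> x [].
split.
  move=> x y t [Kx Hx] [Ky Hy] t01; split; first exact: cone_convex.
  rewrite mulmxDl -!scalemxAl; exact: HH.2.1 _ _ _ Hx Hy t01.
move=> x y t Kx Ky t01 [Kz Hz]; move: Hz; rewrite mulmxDl -!scalemxAl => Hz.
have Lx : lin_image M K (x *m M) by exists x.
have Ly : lin_image M K (y *m M) by exists y.
have [] := HH.2.2 _ _ _ Lx Ly t01 Hz.
by split; split.
Qed.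

End Aux.

Theorem mainTheorem5 (R : realType) (n m : nat) (M : 'M[R]_(n, m))
  (K : 'rV[R]_n -> Prop) (b : 'rV[R]_m) (r : nat) (v : nat -> 'rV[R]_m) :
  convex_cone K ->
  (exists x, feas M K b x) ->
  (forall i, (i < r)%N -> dotv b (v i) = 0) ->
  (forall i, (i < r)%N -> dual (Nk M K v i) (v i)) ->
  (* (1) *)
  (forall i, (i < r)%N ->
     (exposes (v i) (Nk M K v i) (setI_ (Nk M K v i) (orth (v i))) /\
      setI_ (Nk M K v i) (orth (v i)) b) /\
     (exposes (adj M (v i)) (Ek M K v i) (setI_ (Ek M K v i) (orth (adj M (v i)))) /\
      subset_ (feas M K b) (setI_ (Ek M K v i) (orth (adj M (v i)))))) /\
  (* (2) *)
  (is_face (Nk M K v r) (lin_image M K) /\ Nk M K v r b /\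
   is_face (Ek M K v r) K /\ subset_ (feas M K b) (Ek M K v r)) /\
  (* (3) *)
  (seteq (Nk M K v r) (face_of (fun y => y = b) (lin_image M K)) <->
   seteq (Ek M K v r) (face_of (feas M K b) K)).
Proof.
move=> HK [x0 [Kx0 x0b]] Hb Hd.
have HC := lin_cone M HK.
have Cb : lin_image M K b by exists x0.
have EN : forall k x, Ek M K v k x -> Nk M K v k (x *m M).
  move=> k x [Kx Hx]; split; first by exists x.
  by move=> j jk; rewrite dot_adj Hx.
have HdE : forall i, (i < r)%N -> dual (Ek M K v i) (adj M (v i)).
  move=> i ir x Ex; rewrite -dot_adj; exact: Hd i ir _ (EN i x Ex).
have Fsub : forall k, (k <= r)%N -> subset_ (feas M K b) (Ek M K v k).
  move=> k kr x [Kx xb]; split => // j jk; rewrite -dot_adj xb; apply: Hb.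
  exact: leq_trans jk kr.
have Nb : forall k, (k <= r)%N -> Nk M K v k b.
  move=> k kr; split => // j jk; apply: Hb; exact: leq_trans jk kr.
have faceN : is_face (Nk M K v r) (lin_image M K) := Hk_face HC Hd.
have faceE : is_face (Ek M K v r) K :=
  Hk_face (w := fun j => adj M (v j)) HK HdE.
split.
  move=> i ir; split; split.
  - exact: expose_face (Hk_cone _ _ HC) (Hd i ir).
  - split; [apply: Nb; exact: ltnW | exact: Hb].
  - exact: expose_face (Hk_cone _ _ HK) (HdE i ir).
  - move=> x fx; split; first exact: Fsub i (ltnW ir) x fx.
    by rewrite /orth -dot_adj fx.2; apply: Hb.
split.
  split; first exact: faceN. split; first exact: Nb r (leqnn r).
  split; first exact: faceE. exact: Fsub r (leqnn r).
split.
- move=> HN x; split.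
  + move=> Ex G HG HFG.
    have Sx : Sb (lin_image M K) b (x *m M).
      apply: ((HN (x *m M)).1 (EN r x Ex)); first exact: Sb_face.
      by move=> z ->; apply: Sb_b.
    case: Sx => _ [w [a [c [[y' [Ky' ew]] [c0 [ca e]]]]]].
    have ha : a != 0 by apply: lt0r_neq0; lra.
    set p := a^-1 *: (y' + c *: x).
    have Kx : K x by case: Ex.
    have Kp : K p.
      apply: HK.2; first by rewrite invr_gt0; lra.
      by apply: HK.1 => //; apply: HK.2.
    have pM : p *m M = b.
      by rewrite /p -scalemxAl mulmxDl -scalemxAl -ew -e scalerA mulVf ?scale1r.
    have Gp := HFG p (conj Kp pM).
    rewrite /p decomp // in Gp.
    have Ky'' : K ((a - c)^-1 *: y') by apply: HK.2 => //; rewrite invr_gt0; lra.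
    exact: (HG.2.2 _ _ _ Ky'' Kx (frac01 c0 ca) Gp).2.
  + by move=> Hx; apply: Hx _ faceE (Fsub r (leqnn r)).
- move=> HE y; split.
  + move=> [[x [Kx ->]] Hy] H HH HbH.
    have Ex : Ek M K v r x.
      by split => // j jk; rewrite -dot_adj; apply: Hy.
    have := (HE x).1 Ex _ (pre_face HK HH).
    move=> h; apply: (h _).2.
    by move=> z [Kz ->]; split => //; apply: HbH.
  + move=> Hy; apply: (Hy (Nk M K v r) faceN) => z ->; exact: Nb r (leqnn r).
Qed.
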